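(* Assume $f<\frac{n}{3}$ and that the protocol satisfies the following requirement (R). Let $v_p$ be any validator that is honest at the time it sends a PROPOSE message for chain $\chi_p$ in a slot $t$ with $4\Delta t\ge\max(\mathsf{GST},\mathsf{GAT})+4\Delta$. Then chain $\chi_p$ is justified at slot $t+1$ (i.e., the checkpoint $(\chi_p,t+1)$ becomes justified), and finalized at slot $t+2$. In particular, for every validator $v_i\in H_{4\Delta(t+2)+2\Delta}$, $\chi_p\preceq\chi^{\mathrm{fin},4\Delta(t+2)+2\Delta}_i$ and $\mathsf{txpool}^{4\Delta t}\subseteq\chi^{\mathrm{fin},4\Delta(t+2)+2\Delta}_i$. Requirement (R): (R1) In any slot $t'$, if an always-honest validator $v_i$ casts an FFG-vote $\mathcal{S}_i\to\mathcal{T}_i$ during round $r$, then (a) the vote is valid; (b) there is a set of messages $\mathcal{V}^{\mathsf{FFGvote},t'}_i\subseteq\mathcal{V}^r_i$ with $\mathcal{S}_i=\mathrm{GJ}(\mathcal{V}^{\mathsf{FFGvote},t'}_i)$; (c) $\mathcal{T}_i.c=t'$. (R2) If a PROPOSE message for chain $\chi_p$ is sent in round $4\Delta t\ge\max(\mathsf{GST},\mathsf{GAT})+\Delta$ by a proposer honest in that round, then: (a) $\chi_p$ includes all transactions in $\mathsf{txpool}^{4\Delta t}$; (b) in slot $t$, all always-honest validators cast valid FFG-votes with the same source checkpoint $\mathcal{S}$ and targets $\mathcal{T}_i$ with $\mathcal{T}_i.\chi\preceq\chi_p$; (c) in slot $t+1$: for every always-honest $v_i$, $\mathcal{V}^{\mathsf{FFGvote},t+1}_i$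 contains $\mathcal{V}^{\mathsf{FFGvote},t}_j$ for every always-honest $v_j$ and all FFG-votes sent by always-honest validators in slot $t$; and every always-honest $v_i$ sends an FFG-vote $\mathcal{S}_i\to\mathcal{T}_i$ with $\mathcal{T}_i.\chi=\chi_p$; (d) in slot $t+2$: for every always-honest $v_i$, $\mathcal{V}^{\mathsf{FFGvote},t+2}_i$ contains $\mathcal{V}^{\mathsf{FFGvote},t+1}_j$ for every always-honest $v_j$ and all FFG-votes sent by always-honest validators in slot $t+1$; and for every validator $v_i$ honest in round $r^*=4\Delta(t+2)+2\Delta$, (i) $\mathcal{V}^{r^*}_i$ contains all FFG-votes cast by always-honest validators in slot $t+2$ and (ii) $\chi^{\mathrm{fin},r^*}_i=\max\{\chi:\chi\preceq\mathrm{GF}(\mathcal{V}^{r^*}_i).\chi\ \wedge\ \chi.p\le\chi_p.p\}$.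
   Context: There are $n$ validators, at most $f$ of which are ever corrupted by an adaptive adversary; a validator is always-honest if it is never corrupted. Time is divided into rounds; slot $t$ consists of rounds $[4\Delta t,4\Delta(t+1))$ and proposals for slot $t$ are made at round $4\Delta t$. The network is partially synchronous: after an unknown time $\mathsf{GST}$, messages are delivered within $\Delta$ rounds; after an unknown time $\mathsf{GAT}$, all validators are always awake. $H_r$ denotes the set of honest validators active (awake and having completed joining) at round $r$. $\mathcal{V}^r_i$ is the view (set of messages received) of $v_i$ at round $r$; $\chi^{\mathrm{fin},r}_i$ is the finalized chain output by $v_i$ at round $r$; $\mathsf{txpool}^r$ is the (ever-growing) set of transactions available at round $r$, and a transaction is in a chain if it is in one of its blocks. Blocks $(b,p)$, chains identified with their last block, $\chi.p$ = slot of the last block, $\preceq$ = prefix. Checkpoints $\mathcal{C}=(\chi,c)$; FFG-vote $\mathcal{C}_1\to\mathcal{C}_2$ valid iff $\mathcal{C}_1.c<\mathcal{C}_2.c$ and $\mathcal{C}_1.\chi\preceq\mathcal{C}_2.\chi$. In a view $\mathcal{V}$: $\mathcal{C}$ is justified iff $\mathcal{C}=(B_{\text{genesis}},0)$ or there are votes in $\mathcal{V}$ from at least $\frac{2}{3}n$ distinct validators with valid FFG-votes $\mathcal{S}\to\mathcal{T}$, $\mathcal{S}$ justified in $\mathcal{V}$, $\mathcal{S}.\chi\preceq\mathcal{C}.\chi\preceq\mathcal{T}.\chi$, $\mathcal{T}.c=\mathcal{C}.c$; $\mathcal{C}$ is finalized iff $\mathcal{C}=(B_{\text{genesis}},0)$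 or $\mathcal{C}$ is justified and there are votes in $\mathcal{V}$ from at least $\frac{2}{3}n$ distinct validators with valid FFG-votes $\mathcal{C}\to\mathcal{T}$, $\mathcal{T}.c=\mathcal{C}.c+1$. Checkpoints are preordered by $\mathcal{C}\le\mathcal{C}'$ iff $\mathcal{C}.c<\mathcal{C}'.c$ or ($\mathcal{C}.c=\mathcal{C}'.c$ and $\mathcal{C}.\chi.p\le\mathcal{C}'.\chi.p$). $\mathrm{GJ}(\mathcal{V})$ (resp. $\mathrm{GF}(\mathcal{V})$) is a maximal justified (resp. finalized) checkpoint in $\mathcal{V}$ for this preorder, ties broken arbitrarily. A chain $\chi$ is justified (finalized) if $\chi=\mathcal{C}.\chi$ for a justified (finalized) checkpoint $\mathcal{C}$. *)

(* Defs.v *)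
From mathcomp Require Import all_boot.

Set Implicit Arguments.
Unset Strict Implicit.
Unset Printing Implicit Defensive.

Section Model.

Variable n : nat.            (* validators are 'I_n *)
Variables Tx Bc : eqType.    (* transactions, block contents *)
Variable bgen : Bc.          (* content of the genesis block *)
Variable btx : Bc -> Tx -> bool.   (* btx b x : transaction x is in block content b *)
Variable O : Type.           (* payloads of all other protocol messages *)

(* A block is a pair (b, p) of content and slot. *)
Definition block := (Bc * nat)%type.

(* A chain is a sequence of blocks starting with the genesis block (B_genesis, 0)
   with strictly increasing slots; it is identified with its last block. *)
Definition wf_chain (s : seq block) : bool :=
  (ohead s == Some (bgen, 0)) && sorted ltn (map snd s).

Definition chain := {s : seq block | wf_chain s}.

Definition cprefix (c1 c2 : chain) : bool := prefix (sval c1) (sval c2).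

(* chi.p : slot of the last block *)
Definition cslot (c : chain) : nat := (last (bgen, 0) (sval c)).2.

Definition tx_in (x : Tx) (c : chain) : bool := has (fun b => btx b.1 x) (sval c).

Lemma wf_genesis : wf_chain [:: (bgen, 0)].
Proof. by rewrite /wf_chain /= eqxx. Qed.

Definition genesis_chain : chain := exist _ [:: (bgen, 0)] wf_genesis.

Definition ckpt := (chain * nat)%type.
Definition genesis_ckpt : ckpt := (genesis_chain, 0).

Definition valid_vote (S T : ckpt) : bool := (S.2 < T.2) && cprefix S.1 T.1.

Definition ckpt_le (C C' : ckpt) : bool :=
  (C.2 < C'.2) || ((C.2 == C'.2) && (cslot C.1 <= cslot C'.1)).

(* messages: FFG votes (sender, source, target), proposals, and anything else *)
Inductive msg :=
| FFGVote of 'I_n & ckpt & ckpt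
| Propose of 'I_n & chain
| OtherMsg of O.

Definition view := msg -> Prop.

Definition subview (V W : view) : Prop := forall m, V m -> W m.

Inductive justified (V : view) : ckpt -> Prop :=
| justified_genesis : justified V genesis_ckpt
| justified_votes (C : ckpt) (A : {set 'I_n}) :
    2 * n <= 3 * #|A| ->
    (forall v, v \in A -> exists S T,
        V (FFGVote v S T) /\ valid_vote S T /\ justified V S /\
        cprefix S.1 C.1 /\ cprefix C.1 T.1 /\ T.2 = C.2) ->
    justified V C.

Definition finalized (V : view) (C : ckpt) : Prop :=
  C = genesis_ckpt \/
  (justified V C /\
   exists A : {set 'I_n}, 2 * n <= 3 * #|A| /\
     forall v, v \in A -> exists T,
       V (FFGVote v C T) /\ valid_vote C T /\ T.2 = C.2.+1).

(* C may be GJ(V) / GF(V): a maximal justified / finalized checkpoint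
   (ties broken arbitrarily) *)
Definition is_GJ (V : view) (C : ckpt) : Prop :=
  justified V C /\ forall C', justified V C' -> ckpt_le C' C.
Definition is_GF (V : view) (C : ckpt) : Prop :=
  finalized V C /\ forall C', finalized V C' -> ckpt_le C' C.

Definition is_max_prefix_upto (c g : chain) (q : nat) : Prop :=
  cprefix c g /\ cslot c <= q /\
  forall c', cprefix c' g -> cslot c' <= q -> cprefix c' c.

Record execution := Execution {
  ex_view : 'I_n -> nat -> view;
  ex_sends : 'I_n -> nat -> msg -> Prop;  (* messages sent by v_i in round r *)
  ex_corrupt : 'I_n -> option nat;        (* Some r0: corrupted from round r0 on; None: always honest *)
  ex_active : 'I_n -> nat -> Prop;        (* awake and having completed joining *)
  ex_fin : 'I_n -> nat -> chain;
  ex_txpool : nat -> Tx -> Prop;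
  ex_ffgview : 'I_n -> nat -> view        (* V^{FFGvote,t}_i *)
}.

Variable E : execution.

Definition honest (i : 'I_n) (r : nat) : Prop :=
  match ex_corrupt E i with None => True | Some r0 => r < r0 end.
Definition always_honest (i : 'I_n) : Prop := ex_corrupt E i = None.
Definition in_H (r : nat) (i : 'I_n) : Prop := honest i r /\ ex_active E i r.

Definition corruption_bound (f : nat) : Prop :=
  #|[set i : 'I_n | ex_corrupt E i != None]| <= f.

Variable Delta : nat.
Definition slot_of (r : nat) : nat := r %/ (4 * Delta).

Definition synchrony (GST : nat) : Prop :=
  forall (j : 'I_n) r m r' (i : 'I_n),
    honest j r -> (ex_sends E j r m \/ ex_view E j r m) ->
    maxn r GST + Delta <= r' -> in_H r' i -> ex_view E i r' m.

(* Authentication: FFG votes of always-honest validators cannot be forged. *)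
Definition authenticated : Prop :=
  forall (i : 'I_n) r (j : 'I_n) S T,
    always_honest j -> ex_view E i r (FFGVote j S T) ->
    exists r0, r0 <= r /\ ex_sends E j r0 (FFGVote j S T).

(* An always-honest validator casts at most one FFG vote per slot
   (its vote of slot t' is the one based on V^{FFGvote,t'}_i). *)
Definition one_vote_per_slot : Prop :=
  forall (j : 'I_n) r1 r2 S1 T1 S2 T2,
    always_honest j -> ex_sends E j r1 (FFGVote j S1 T1) ->
    ex_sends E j r2 (FFGVote j S2 T2) -> slot_of r1 = slot_of r2 ->
    S1 = S2 /\ T1 = T2.

Definition R1 : Prop :=
  forall (i : 'I_n) r S T,
    always_honest i -> ex_sends E i r (FFGVote i S T) ->
    [/\ valid_vote S T,
        subview (ex_ffgview E i (slot_of r)) (ex_view E i r),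
        is_GJ (ex_ffgview E i (slot_of r)) S
      & T.2 = slot_of r].

Definition has_honest_votes_of_slot (t : nat) (V : view) : Prop :=
  forall (j : 'I_n) r S T, always_honest j -> slot_of r = t ->
    ex_sends E j r (FFGVote j S T) -> V (FFGVote j S T).

Definition R2 (GST GAT : nat) : Prop :=
  forall (t : nat) (p : 'I_n) (chip : chain),
    maxn GST GAT + Delta <= 4 * Delta * t ->
    honest p (4 * Delta * t) -> ex_sends E p (4 * Delta * t) (Propose p chip) ->
    [/\
        (forall x, ex_txpool E (4 * Delta * t) x -> tx_in x chip),
        (exists S, forall i, always_honest i -> exists r T,
            slot_of r = t /\ ex_sends E i r (FFGVote i S T) /\
            valid_vote S T /\ cprefix T.1 chip),
        (forall i, always_honest i ->
           (forall j, always_honest j ->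
              subview (ex_ffgview E j t) (ex_ffgview E i t.+1)) /\
           has_honest_votes_of_slot t (ex_ffgview E i t.+1) /\
           exists r S T, slot_of r = t.+1 /\
             ex_sends E i r (FFGVote i S T) /\ T.1 = chip)
      &
        (forall i, always_honest i ->
           (forall j, always_honest j ->
              subview (ex_ffgview E j t.+1) (ex_ffgview E i t.+2)) /\
           has_honest_votes_of_slot t.+1 (ex_ffgview E i t.+2) /\
           exists r S T, slot_of r = t.+2 /\ ex_sends E i r (FFGVote i S T)) /\
        (let rs := 4 * Delta * t.+2 + 2 * Delta in
         forall i, honest i rs ->
           has_honest_votes_of_slot t.+2 (ex_view E i rs) /\
           exists C, is_GF (ex_view E i rs) C /\
             is_max_prefix_upto (ex_fin E i rs) C.1 (cslot chip))].

End Model.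

(* Main.v *)
Require Import Defs.
From mathcomp Require Import all_boot.
From mathcomp Require Import zify.


Lemma just_mono (n : nat) (Bc : eqType) (bgen : Bc) (O : Type) (V W : view n bgen O) : subview V W ->
  forall C, justified V C -> justified W C.
Proof.
move=> HVW; fix IH 2 => C HC.
case: HC => [|C' A HA HV]; first exact: justified_genesis.
apply: (@justified_votes _ _ _ _ W C' A HA) => v Hv.
case: (HV v Hv) => S [T [H1 [H2 [H3 [H4 [H5 H6]]]]]].
exists S, T; split; first exact: HVW.
split=> //; split; first exact: IH.
by [].
Qed.

Lemma cprefix_refl (Bc : eqType) (bgen : Bc) (c : chain bgen) : cprefix c c.
Proof. by rewrite /cprefix prefix_refl. Qed.

Lemma cprefix_trans (Bc : eqType) (bgen : Bc) (a b c : chain bgen) : cprefix a b -> cprefix b c -> cprefix a c.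
Proof.
rewrite /cprefix => /prefixP [s1 E1] /prefixP [s2 E2]; apply/prefixP.
by exists (s1 ++ s2); rewrite E2 E1 catA.
Qed.

Lemma prefix_slot_eq (Bc : eqType) (bgen : Bc) (c1 c2 : chain bgen) :
  cprefix c1 c2 -> cslot c2 <= cslot c1 -> c1 = c2.
Proof.
case: c1 => s1 w1; case: c2 => s2 w2; rewrite /cprefix /cslot /=.
move=> /prefixP [s E]; subst s2; move: w2.
case: s => [|x s] w2 Hle.
  by apply: val_inj => /=; rewrite cats0.
exfalso.
move: w1 w2 Hle; rewrite /wf_chain.
case/lastP: s1 => [|s1' a] //.
move=> _ /andP [_ Hs].
rewrite last_cat !last_rcons.
move: Hs; rewrite map_cat map_rcons /= -cats1 -catA /= sorted_cat_cons.
case/andP => _; rewrite (path_sortedE ltn_trans) => /andP [Hall _].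
have : (last x s).2 \in map snd (x :: s) by apply: map_f; apply: mem_last.
rewrite /= in_cons => /orP [/eqP ->|Hin].
  by move: Hall => /= /andP [H _]; rewrite leqNgt H.
by move: Hall => /= /andP [_ /allP /(_ _ Hin) H]; rewrite leqNgt H.
Qed.

Arguments just_mono {n Bc bgen O V W}.
Arguments cprefix_refl {Bc bgen}.
Arguments cprefix_trans {Bc bgen a b c}.
Arguments prefix_slot_eq {Bc bgen c1 c2}.

Theorem theorem4p5 (n f Delta GST GAT : nat) (Tx Bc : eqType) (bgen : Bc)
  (btx : Bc -> Tx -> bool) (O : Type) (E : execution n Tx bgen O) :
  0 < Delta ->
  3 * f < n ->
  corruption_bound E f ->
  synchrony E Delta GST ->
  authenticated E ->
  one_vote_per_slot E Delta ->
  R1 E Delta ->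
  R2 btx E Delta GST GAT ->
  forall (t : nat) (p : 'I_n) (chip : chain bgen),
    maxn GST GAT + 4 * Delta <= 4 * Delta * t ->
    honest E p (4 * Delta * t) ->
    ex_sends E p (4 * Delta * t) (Propose O p chip) ->
    (forall j, always_honest E j ->
       justified (ex_ffgview E j t.+2) (chip, t.+1)) /\
    (let rs := 4 * Delta * t.+2 + 2 * Delta in
     forall i, in_H E rs i ->
       [/\ justified (ex_view E i rs) (chip, t.+1),
           finalized (ex_view E i rs) (chip, t.+1),
           cprefix chip (ex_fin E i rs)
         & forall x, ex_txpool E (4 * Delta * t) x -> tx_in btx x (ex_fin E i rs)]).
Proof.
move=> HD Hf Hcb Hsync Hauth H1v HR1 HR2 t p chip Ht Hp Hprop.
have Ht' : maxn GST GAT + Delta <= 4 * Delta * t by lia.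
have [R2a R2b R2c [R2d1 R2d2]] := HR2 t p chip Ht' Hp Hprop.
have HdP : 0 < 4 * Delta by lia.
have slotB : forall r k, slot_of Delta r = k -> k * (4 * Delta) <= r < k.+1 * (4 * Delta).
  move=> r k <-; rewrite /slot_of leq_divM /=; exact: ltn_ceil.
set rs := 4 * Delta * t.+2 + 2 * Delta.
have slot_rs : slot_of Delta rs = t.+2.
  rewrite /slot_of /rs mulnC divnMDl // divn_small ?addn0 //; lia.
set B := [set i : 'I_n | ex_corrupt E i != None].
have inB : forall i, (i \in ~: B) = (ex_corrupt E i == None).
  by move=> i; rewrite !inE negbK.
have cardH : 2 * n <= 3 * #|~: B|.
  have := cardsC B; rewrite card_ord; move: Hcb; rewrite /corruption_bound -/B; lia.
have quorum : forall A : {set 'I_n}, 2 * n <= 3 * #|A| ->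
    exists v, v \in A /\ always_honest E v.
  move=> A HA; case: (set0Pn (A :\: B)) => [[v]|H0].
    by rewrite !inE => /andP [/negPn /eqP Hv Hv']; exists v.
  exfalso; have : A \subset B.
    apply/subsetP => x xA; apply/negPn/negP => xnB; apply: H0; exists x; by rewrite inE xnB xA.
  
  move/subset_leq_card; move: Hcb; rewrite /corruption_bound -/B; move=> HBf HAB; have H3 := leq_trans HA (leq_mul (leqnn 3) (leq_trans HAB HBf)); lia.
have U : forall k r v S' T', always_honest E v ->
    ex_view E k r (FFGVote O v S' T') -> T'.2 = t.+1 -> T'.1 = chip.
  move=> k r v S' T' Hv HV HT.
  have [r0 [_ Hs0]] := Hauth k r v S' T' Hv HV.
  have [_ _ _ HT0] := HR1 v r0 S' T' Hv Hs0.
  have [_ [_ [r1 [S [T [Hsl [Hs1 HTc]]]]]]] := R2c v Hv.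
  have [_ ->] := H1v v r0 r1 S' T' S T Hv Hs0 Hs1 ltac:(by rewrite -HT0 HT Hsl).
  exact: HTc.
have J : forall (V : view n bgen O) k r C, subview V (ex_view E k r) ->
    justified V C -> C.2 = t.+1 -> cprefix C.1 chip.
  move=> V k r C HV HC; case: HC => [//|C' A HA HvA] HC'.
  have [v [vA vh]] := quorum A HA.
  have [S' [T' [HV' [_ [_ [_ [H5 H6]]]]]]] := HvA v vA.
  by rewrite -(U k r v S' T' vh (HV _ HV')) // H6.
have K : forall (V : view n bgen O) k r C, subview V (ex_view E k r) ->
    slot_of Delta r <= t.+2 -> finalized V C -> C = genesis_ckpt bgen \/ C.2 <= t.+1.
  move=> V k r C HV Hsl [->|[_ [A [HA HvA]]]]; [by left | right].
  have [v [vA vh]] := quorum A HA.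
  have [T [HVT [_ HT2]]] := HvA v vA.
  have [r0 [Hr0 Hs0]] := Hauth k r v C T vh (HV _ HVT).
  have [_ _ _ HT0] := HR1 v r0 C T vh Hs0.
  have := leq_div2r (4 * Delta) Hr0; rewrite -/(slot_of Delta r0) -/(slot_of Delta r).
  lia.
have G : forall V : view n bgen O,
    (forall v r S T, always_honest E v -> slot_of Delta r = t.+1 ->
       ex_sends E v r (FFGVote O v S T) -> V (FFGVote O v S T)) ->
    (forall v r S T, always_honest E v -> slot_of Delta r = t.+1 ->
       ex_sends E v r (FFGVote O v S T) -> subview (ex_ffgview E v t.+1) V) ->
    justified V (chip, t.+1).
  move=> V G1 G2; apply: (justified_votes cardH) => v; rewrite inB => /eqP vh.
  have [_ [_ [r [S [T [Hsl [Hs HT1]]]]]]] := R2c v vh.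
  have [Hval Hsub [JS _] HT2] := HR1 v r S T vh Hs.
  exists S, T; split; first exact: (G1 v r).
  split=> //; split.
    apply: (just_mono (G2 v r S T vh Hsl Hs)); by rewrite -Hsl.
  split; first by move: Hval => /andP [_]; rewrite HT1.
  split; first by rewrite HT1 cprefix_refl.
  by rewrite HT2 Hsl.
have Goal1 : forall j, always_honest E j -> justified (ex_ffgview E j t.+2) (chip, t.+1).
  move=> j jh; have [Hsub [Hhv _]] := R2d1 j jh.
  apply: G => [v r S T vh Hsl Hs|v r S T vh _ _]; first exact: (Hhv v r S T vh Hsl Hs).
  exact: Hsub.
split; first exact: Goal1.
move=> rs0; rewrite /rs0 -/rs => {rs0} i [ih iact].
have hon : forall v r, always_honest E v -> honest E v r.
  by move=> v r vh; rewrite /honest vh.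
have bnd : forall r, slot_of Delta r = t.+1 -> maxn r GST + Delta <= rs.
  move=> r /slotB /andP [_ Hr]; rewrite /rs.
  have : GST <= maxn GST GAT by apply: leq_maxl.
  have E1 : t.+2 * (4 * Delta) = 4 * (Delta * t) + 8 * Delta.
    by rewrite mulnC mulnA (mulnC 4 Delta) -mulnA !mulnS; lia.
  have E2 : 4 * Delta * t.+2 = 4 * (Delta * t) + 8 * Delta.
    by rewrite -E1 mulnC.
  have E3 : 4 * Delta * t = 4 * (Delta * t) by rewrite mulnA (mulnC 4 Delta).
  move: Ht Hr; rewrite E1 E2 E3; lia.
have Ja : justified (ex_view E i rs) (chip, t.+1).
  apply: G => [v r S T vh Hsl Hs|v r S T vh Hsl Hs].
    exact: (Hsync v r _ rs i (hon v r vh) (or_introl Hs) (bnd r Hsl) (conj ih iact)).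
  have [_ Hsub _ _] := HR1 v r S T vh Hs.
  move=> m Hm; apply: (Hsync v r m rs i (hon v r vh) _ (bnd r Hsl) (conj ih iact)).
  by right; apply: Hsub; rewrite Hsl.
have [Hhv [C [[HCf HCmax] Hmax]]] := R2d2 i ih.
have Fin : finalized (ex_view E i rs) (chip, t.+1).
  right; split; first exact: Ja.
  exists (~: B); split; first exact: cardH.
  move=> v; rewrite inB => /eqP vh.
  have [_ [_ [r [S [T [Hsl Hs]]]]]] := R2d1 v vh.
  have [Hval Hsub [JS GJmax] HT2] := HR1 v r S T vh Hs.
  rewrite Hsl in Hsub JS GJmax HT2.
  have Hle := GJmax _ (Goal1 v vh).
  have HS2 : S.2 < t.+2 by move: Hval => /andP [+ _]; rewrite HT2.
  move: Hle; rewrite /ckpt_le /= => /orP [Hlt|/andP [/eqP HS2' Hcs]]; first by lia.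
  have Hpre : cprefix S.1 chip.
    by apply: (J (ex_ffgview E v t.+2) v r S) => //; rewrite HS2'.
  have HS1 := prefix_slot_eq Hpre Hcs.
  have HSe : S = (chip, t.+1) by case: S HS1 HS2' {Hval Hsub JS GJmax Hs HS2 Hpre Hcs} => a b /= -> ->.
  subst S; exists T; split; first exact: (Hhv v r _ T vh Hsl Hs).
  by split => //; rewrite HT2.
have HC1 : C.1 = chip.
  have HleC := HCmax _ Fin.
  have := K (ex_view E i rs) i rs C (fun m h => h) ltac:(by rewrite slot_rs) HCf.
  case=> [HCg|HC2].
    by move: HleC; rewrite HCg /ckpt_le /=.
  move: HleC; rewrite /ckpt_le /= => /orP [Hlt|/andP [/eqP HC2' Hcs]]; first by lia.
  case: HCf => [HCg|[Jc _]].
    by move: HC2'; rewrite HCg.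
  have Hpre := J (ex_view E i rs) i rs C (fun m h => h) Jc (esym HC2').
  by rewrite (prefix_slot_eq Hpre Hcs).
have Hpf : cprefix chip (ex_fin E i rs).
  case: Hmax => [_ [_ Hm3]]; apply: Hm3 => //; rewrite HC1 cprefix_refl //.
split=> //.
move=> x Hx; have := R2a x Hx.
move: Hpf; rewrite /cprefix /tx_in => /prefixP [s' ->].
by rewrite has_cat => ->.
Qed.
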